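(* Given a time parameter $t$, there exists a deterministic neural network (of deterministic threshold gates) with one input neuron $x$, a vector $\bar y$ of $\log t$ output neurons, and $O(\log t)$ auxiliary neurons, such that within a time window of $t$ rounds, for every round $\tau$: if $x$ fired $r_\tau$ times in the last $\tau$ rounds, then the output $\bar y$ encodes (in binary) the number $r_\tau$ by round $\tau+\log r_\tau+1$.
   Context: A neural network consists of input neurons (no incoming edges), output neurons and auxiliary neurons, connected by directed weighted edges with weights $w(u,v)\in\mathbb{R}$ (self-loops allowed); every neuron $v$ has a threshold $b(v)\ge 0$ and is either excitatory (all outgoing weights $\ge0$) or inhibitory (all outgoing weights $\le 0$). The network evolves in discrete synchronous rounds; $u^\tau\in\{0,1\}$ indicates whether $u$ fires in round $\tau$, input firings are given externally, and a deterministic threshold gate $u$ fires in round $\tau$ iff $\sum_v w(v,u)\,v^{\tau-1}-b(u)\ge 0$. *)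

(* Defs.v *)
From HB Require Import structures.
From mathcomp Require Import all_boot all_order all_algebra.
From mathcomp Require Import reals.
Set Implicit Arguments. Unset Strict Implicit. Unset Printing Implicit Defensive.
Import Order.TTheory GRing.Theory Num.Theory.

(* Neurons of a network with one input neuron, k output neurons and
   m auxiliary neurons:  inl tt = the input x,
   inr (inl i) = output y_i,  inr (inr j) = auxiliary neuron j. *)
Definition neuron (k m : nat) : finType := (unit + ('I_k + 'I_m))%type.

Definition input_neuron (k m : nat) : neuron k m := inl tt.
Definition output_neuron (k m : nat) (i : 'I_k) : neuron k m := inr (inl i).

Record network (R : realType) (k m : nat) := Network {
  weight : neuron k m -> neuron k m -> R;
  thresh : neuron k m -> R;
  excitatory : neuron k m -> bool
}.

Definition wf_network (R : realType) (k m : nat) (N : network R k m) : Prop :=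
  (forall u, weight N u (input_neuron k m) = 0%R) /\
  (forall v, (0 <= thresh N v)%R) /\
  (forall u v, excitatory N u -> (0 <= weight N u v)%R) /\
  (forall u v, ~~ excitatory N u -> (weight N u v <= 0)%R).

Fixpoint fires (R : realType) (k m : nat) (N : network R k m)
    (inp : nat -> bool) (tau : nat) (v : neuron k m) : bool :=
  match tau with
  | 0 => false
  | tau'.+1 =>
      match v with
      | inl _ => inp tau
      | inr _ =>
          (0 <= (\sum_(u : neuron k m)
                   (if fires N inp tau' u then weight N u v else 0))
                - thresh N v)%R
      end
  end.

Definition input_count (inp : nat -> bool) (tau : nat) : nat :=
  \sum_(1 <= s < tau.+1) inp s.

Definition output_value (R : realType) (k m : nat) (N : network R k m)
    (inp : nat -> bool) (s : nat) : nat :=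
  \sum_(i < k) fires N inp s (output_neuron m i) * 2 ^ i.

(* Main.v *)
Require Import Defs.
From HB Require Import structures.
From mathcomp Require Import all_boot all_order all_algebra.
From mathcomp Require Import reals.
From mathcomp Require Import zify ring lra.

Module Helpers.
Set Implicit Arguments. Unset Strict Implicit. Unset Printing Implicit Defensive.
Import Order.TTheory GRing.Theory Num.Theory.

Definition xin (inp : nat -> bool) (s : nat) : bool := (s != 0) && inp s.
Fixpoint dig (inp : nat -> bool) (s j : nat) : nat :=
  match s with 0 => 0 | s'.+1 => (dig inp s' j == 1) +
     (if j is j'.+1 then dig inp s' j' == 2 else xin inp s') end.
Definition cin inp s j : bool := if j is j'.+1 then dig inp s j' == 2 else xin inp s.
Definition Val inp p s := \sum_(0 <= j < p) dig inp s j * 2^j.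

Lemma dig_le2 inp s j : dig inp s j <= 2.
Proof. case: s => [|s] //=; case: (_ == 1); case: j => [|j] //=; by [case: (xin _ _)|case: (_ == 2)]. Qed.

Lemma digS inp s j : dig inp s.+1 j = (dig inp s j == 1) + cin inp s j.
Proof. by case: j. Qed.

Lemma Val_step inp p s : Val inp p s.+1 + 2^p * cin inp s p = Val inp p s + xin inp s.
Proof.
elim: p => [|p IH]; first by rewrite /Val !big_geq //= mul1n.
rewrite /Val !big_nat_recr // -/(Val inp p s.+1) -/(Val inp p s) digS.
have := dig_le2 inp s p. move: IH. rewrite expnS /=.
set P := 2^p; set c := cin inp s p; set d := dig inp s p.
case: d => [|[|[|]]] //= IH _; lia.
Qed.

Lemma cntS inp s : input_count inp s.+1 = input_count inp s + inp s.+1.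
Proof. by rewrite /input_count big_nat_recr. Qed.

Lemma cnt_le inp s : input_count inp s <= s.
Proof. elim: s => [|s IH]; first by rewrite /input_count big_geq.
rewrite cntS; case: (inp _); lia. Qed.

Lemma Val_cnt inp N s : input_count inp s < 2^N -> Val inp N s.+1 = input_count inp s.
Proof.
elim: s => [|s IH] H.
  have V0 : Val inp N 0 = 0 by rewrite /Val big1_seq.
  have := Val_step inp N 0. rewrite V0 /input_count big_geq //. rewrite /xin eqxx /=. lia.
have := Val_step inp N s.+1. rewrite IH; last by move: H; rewrite cntS; lia.
rewrite /xin /= cntS in H *. case: (cin _ _ _) => /=; last by lia.
move: H; set P := 2^N; lia.
Qed.

Lemma Val_bound inp p s : Val inp p s + 2 <= 2^p.+1.
Proof.
elim: p => [|p IH]; first by rewrite /Val big_geq.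
rewrite /Val big_nat_recr //= -/(Val inp p s).
have := dig_le2 inp s p. move: IH. rewrite !expnS. set P := 2^p. nia.
Qed.

Lemma Val_mod inp p d s : Val inp (p + d) s %% 2^p = Val inp p s %% 2^p.
Proof.
elim: d => [|d IH]; first by rewrite addn0.
rewrite addnS /Val big_nat_recr //= -/(Val inp (p+d) s).
by rewrite expnD mulnA mulnAC addnC modnMDl IH.
Qed.

Lemma bitT T h : 0 < h -> T < 4*h ->
  ((h <= T) && ~~(2*h <= T)) || (3*h <= T) = (h <= T %% (2*h)).
Proof.
move=> h0 T4; case: (ltnP T (2*h)) => H.
  rewrite modn_small //; apply/idP/idP; lia.
have -> : T = (T - 2*h) + 2*h by lia.
rewrite modnDr modn_small; last by lia.
apply/idP/idP; lia.
Qed.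

Lemma binsum N k : \sum_(0 <= i < k) (2^i <= N %% 2^i.+1) * 2^i = N %% 2^k.
Proof.
elim: k => [|k IH]; first by rewrite big_geq // modn1.
rewrite big_nat_recr //= IH.
have -> : N %% 2^k = (N %% 2^k.+1) %% 2^k.
  by rewrite modn_dvdm // expnS dvdn_mull.
have := ltn_pmod N (expn_gt0 2 k.+1).
rewrite expnS. set r := N %% (2 * 2^k). set P := 2^k. move=> rlt.
have P0 : 0 < P by rewrite expn_gt0.
case: (ltnP r P) => H.
  by rewrite modn_small //= addn0.
have -> : r %% P = r - P.
  have {1}-> : r = (r - P) + P by lia.
  by rewrite modnDr modn_small; lia.
rewrite /=; lia.
Qed.

Local Close Scope ring_scope.
Local Open Scope ring_scope.

Lemma sum_unit (R : realType) (F : unit -> R) : \sum_(u : unit) F u = F tt.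
Proof. by rewrite (eq_bigl (pred1 tt)) ?big_pred1_eq // => -[]. Qed.

Lemma sum_neuron (R : realType) k m (F : neuron k m -> R) :
  \sum_u F u = F (inl tt) + \sum_(i < k) F (inr (inl i)) + \sum_(a < m) F (inr (inr a)).
Proof. rewrite big_sumType sum_unit big_sumType; exact: addrA. Qed.

Lemma sum_blocks (R : realType) n p (G : nat -> R) :
  \sum_(0 <= a < p * n) G a = \sum_(0 <= b < p) \sum_(0 <= j < n) G (b * n + j)%N.
Proof.
elim: p => [|p IH]; first by rewrite !big_geq.
rewrite big_nat_recr //= -IH mulSnr (@big_cat_nat _ _ _ (p*n)%N) ?leq_addr //=.
congr (_ + _).
rewrite -{1}(add0n (p * n)%N) big_addn addKn.
by apply: eq_bigr => j _; rewrite addnC.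
Qed.

Lemma sum_pick (R : realType) n j' (f : nat -> R) : (j' < n)%N ->
  \sum_(0 <= j < n) (if j == j' then f j else 0) = f j'.
Proof.
elim: n => [|n IH] //= H.
rewrite big_nat_recr //=.
case: (ltnP j' n) => H2.
  by rewrite IH // (_ : (n == j') = false) ?addr0 //; apply/negbTE; lia.
have -> : j' = n by lia.
rewrite eqxx big1_seq ?add0r // => j; rewrite mem_index_iota => /andP[_ Hj].
by rewrite (_ : (j == n) = false) //; apply/negbTE; lia.
Qed.

Lemma sum_restr (R : realType) n L (f : nat -> R) : (L <= n)%N ->
  \sum_(0 <= j < n) (if (j < L)%N then f j else 0) = \sum_(0 <= j < L) f j.
Proof.
move=> H; rewrite (@big_cat_nat _ _ _ L) //= [X in _ + X]big1_seq ?addr0.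
  by apply: eq_big_nat => j /andP[_ ->].
by move=> j /andP[_]; rewrite mem_index_iota => /andP[Hj _]; rewrite ltnNge Hj.
Qed.

Local Close Scope ring_scope.
Local Open Scope ring_scope.

Definition thrG (b j : nat) : nat :=
  match b with 3 => 2^j | 4 => 2^j.+1 | 5 => 3 * 2^j | _ => 1 end.
Definition levG (k b j : nat) : nat := if b == 6 then k else j.
Definition specB inp k s (b j : nat) : bool :=
  match b with
  | 0 => 1 <= dig inp s j
  | 1 | 2 => 2 <= dig inp s j
  | 3 | 4 | 5 | 6 => thrG b j <= Val inp (levG k b j).+1 s
  | _ => false end%N.

Definition wb (R : realType) k (b j b' j' : nat) : R :=
  if (b' <= 2)%N then
    match b with 0 => (j == j')%:R | 1 => (j.+1 == j')%:R | 2 => - (j == j')%:R | _ => 0 end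
  else if (b' <= 6)%N then
    let L := levG k b' j' in
    match b with 0 => ((j <= L) * 2^j)%N%:R | 1 => ((j < L) * 2^j.+1)%N%:R
            | 2 => - ((j <= L) * 2^j)%N%:R | _ => 0 end
  else 0.
Definition wx (R : realType) (b' j' : nat) : R :=
  if (b' <= 2)%N then (j' == 0%N)%:R else if (b' <= 6)%N then 1 else 0.
Definition wy (R : realType) (b j i : nat) : R :=
  match b with 3 => 2 * (j == i)%:R | 4 => - (2 * (j == i)%:R) | 5 => 2 * (j == i)%:R
  | 6 => - ((i == 0%N) && (j == 0%N))%:R | _ => 0 end.
Definition thA (b' j' : nat) : nat :=
  match b' with 0 => 1 | 1 | 2 => 2 | _ => thrG b' j' end.
Definition excitB (b : nat) : bool := ~~ (b \in [:: 2; 4; 6]%N).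

Definition net (R : realType) (k : nat) : network R k (7 * k.+1) :=
  let n := k.+1 in
  Network
  (fun u v => match v with
   | inl _ => 0
   | inr (inl i) => match u with inl _ => (i == 0%N :> nat)%:R | inr (inl _) => 0
                    | inr (inr a) => wy R (a %/ n) (a %% n) i end
   | inr (inr a') => match u with inl _ => wx R (a' %/ n) (a' %% n) | inr (inl _) => 0
                    | inr (inr a) => wb R k (a %/ n) (a %% n) (a' %/ n) (a' %% n) end
   end)
  (fun v => match v with inl _ => 0 | inr (inl _) => 1
            | inr (inr a') => (thA (a' %/ k.+1) (a' %% k.+1))%:R end)
  (fun v => match v with inr (inr a) => excitB (a %/ k.+1) | _ => true end).

Lemma net_wf (R : realType) k : wf_network (net R k).
Proof.
split; first by [].
split; first by case=> [_|[i|a]] //=; rewrite ?ler01 ?ler0n.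
split.
  move=> u v; case: u => [[]|[i|a]] /= Hex; case: v => [[]|[i'|a']] //=.
  - by rewrite /wx; case: ifP => _; rewrite ?ler0n //; case: ifP => _; rewrite ?ler01.
  - move: Hex; rewrite /excitB /wy.
    case: (a %/ k.+1)%N => [|[|[|[|[|[|[|b]]]]]]] //= _; by rewrite ?mulr_ge0 ?ler0n.
  - move: Hex; rewrite /excitB /wb.
    case: (a %/ k.+1)%N => [|[|[|[|[|[|[|b]]]]]]] //= _;
    by case: ifP => _; rewrite ?ler0n //; case: ifP => _; rewrite ?ler0n.
move=> u v; case: u => [[]|[i|a]] /= Hex; case: v => [[]|[i'|a']] //=.
- move: Hex; rewrite /excitB /wy.
  case: (a %/ k.+1)%N => [|[|[|[|[|[|[|b]]]]]]] //= _; by rewrite ?oppr_le0 ?mulr_ge0 ?ler0n.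
- move: Hex; rewrite /excitB /wb.
  case: (a %/ k.+1)%N => [|[|[|[|[|[|[|b]]]]]]] //= _;
  by case: ifP => _; rewrite ?oppr_le0 ?ler0n //; case: ifP => _; rewrite ?oppr_le0 ?ler0n.
Qed.

Local Close Scope ring_scope.
Local Open Scope ring_scope.

Lemma sum7 (R : realType) (H : nat -> R) :
  \sum_(0 <= b < 7) H b = H 0%N + H 1%N + H 2%N + H 3%N + H 4%N + H 5%N + H 6%N.
Proof. by rewrite !big_nat_recr //= big_geq // add0r. Qed.

Lemma dig12 (R : realType) inp s j :
  ((1 <= dig inp s j)%N%:R - (2 <= dig inp s j)%N%:R : R) = (dig inp s j == 1%N)%:R.
Proof. by have := dig_le2 inp s j; case: (dig inp s j) => [|[|[|]]] //= _; rewrite ?subrr ?subr0. Qed.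

Lemma dig2 inp s j : (2 <= dig inp s j)%N = (dig inp s j == 2%N).
Proof. by have := dig_le2 inp s j; case: (dig inp s j) => [|[|[|]]]. Qed.

Lemma aux_uvw (R : realType) k inp s b' j' : (b' <= 2)%N -> (j' < k.+1)%N ->
  (xin inp s)%:R * wx R b' j' +
  \sum_(0 <= b < 7) \sum_(0 <= j < k.+1) (if specB inp k s b j then wb R k b j b' j' else 0)
  = (dig inp s.+1 j')%:R.
Proof.
move=> Hb Hj; rewrite sum7.
have Z : forall b, (3 <= b)%N -> \sum_(0 <= j < k.+1) (if specB inp k s b j then wb R k b j b' j' else 0) = 0.
  move=> b H3; apply: big1_seq => j _; rewrite /wb Hb.
  by case: b H3 => [|[|[|b]]] //= _; case: ifP.
rewrite (Z 3%N) // (Z 4%N) // (Z 5%N) // (Z 6%N) // !addr0 /=.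
have -> : \sum_(0 <= j < k.+1) (if (1 <= dig inp s j)%N then wb R k 0 j b' j' else 0)
   = (1 <= dig inp s j')%N%:R.
  rewrite -(sum_pick (fun j => (1 <= dig inp s j)%N%:R) Hj).
  by apply: eq_bigr => j _; rewrite /wb Hb /=; case: (j == j'); case: ifP.
have -> : \sum_(0 <= j < k.+1) (if (2 <= dig inp s j)%N then wb R k 2 j b' j' else 0)
   = - (2 <= dig inp s j')%N%:R.
  rewrite -(sum_pick (fun j => - (2 <= dig inp s j)%N%:R) Hj).
  by apply: eq_bigr => j _; rewrite /wb Hb /=; case: (j == j'); case: ifP; rewrite ?oppr0.
rewrite natrD -dig12.
clear Z; case: j' Hj => [|j'] Hj.
  rewrite big1_seq; first by rewrite /wx Hb /= mulr1 /=; ring.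
  by move=> j _; rewrite /wb Hb /=; case: ifP.
have -> : \sum_(0 <= j < k.+1) (if (2 <= dig inp s j)%N then wb R k 1 j b' j'.+1 else 0)
   = (2 <= dig inp s j')%N%:R.
  rewrite -(sum_pick (fun j => (2 <= dig inp s j)%N%:R) (ltnW Hj)).
  by apply: eq_bigr => j _; rewrite /wb Hb /= eqSS; case: (j == j'); case: ifP.
rewrite /wx Hb /= mulr0 add0r dig2; ring.
Qed.

Lemma aux_G (R : realType) k inp s b' j' : (3 <= b' <= 6)%N -> (j' < k.+1)%N ->
  (xin inp s)%:R * wx R b' j' +
  \sum_(0 <= b < 7) \sum_(0 <= j < k.+1) (if specB inp k s b j then wb R k b j b' j' else 0)
  = (Val inp (levG k b' j').+1 s.+1)%:R.
Proof.
move=> /andP[Hb3 Hb6] Hj.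
have Hb : (b' <= 2)%N = false by apply/negbTE; lia.
have HL : (levG k b' j' < k.+1)%N by rewrite /levG; case: ifP.
set L := levG k b' j' in HL *.
rewrite sum7.
have Z : forall b, (3 <= b)%N -> \sum_(0 <= j < k.+1) (if specB inp k s b j then wb R k b j b' j' else 0) = 0.
  move=> b H3; apply: big1_seq => j _; rewrite /wb Hb Hb6.
  by case: b H3 => [|[|[|b]]] //= _; case: ifP.
rewrite (Z 3%N) // (Z 4%N) // (Z 5%N) // (Z 6%N) // !addr0.
have E0 : \sum_(0 <= j < k.+1) (if specB inp k s 0 j then wb R k 0 j b' j' else 0)
   = \sum_(0 <= j < L.+1) ((1 <= dig inp s j) * 2^j)%N%:R.
  rewrite -(sum_restr _ HL); apply: eq_bigr => j _; rewrite /wb Hb Hb6 /= -/L ltnS.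
  by case: (j <= L)%N; case: (1 <= dig inp s j)%N; rewrite /= ?mul0n ?mul1n.
have E1 : \sum_(0 <= j < k.+1) (if specB inp k s 1 j then wb R k 1 j b' j' else 0)
   = \sum_(0 <= j < L) ((dig inp s j == 2%N) * 2^j.+1)%N%:R.
  rewrite -(sum_restr _ (ltnW HL)); apply: eq_bigr => j _; rewrite /wb Hb Hb6 /= -/L -dig2.
  by case: (j < L)%N; case: (2 <= dig inp s j)%N; rewrite /= ?mul0n ?mul1n.
have E2 : \sum_(0 <= j < k.+1) (if specB inp k s 2 j then wb R k 2 j b' j' else 0)
   = - \sum_(0 <= j < L.+1) ((2 <= dig inp s j) * 2^j)%N%:R.
  rewrite -sumrN -(sum_restr _ HL); apply: eq_bigr => j _; rewrite /wb Hb Hb6 /= -/L ltnS.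
  by case: (j <= L)%N; case: (2 <= dig inp s j)%N; rewrite /= ?mul0n ?mul1n ?oppr0.
rewrite E0 E1 E2 /wx Hb Hb6 mulr1.
have -> : Val inp L.+1 s.+1 = (\sum_(0 <= j < L.+1) ((dig inp s j == 1%N) * 2^j))%N
     + (\sum_(0 <= j < L.+1) (cin inp s j * 2^j))%N.
  by rewrite /Val -big_split; apply: eq_bigr => j _; rewrite digS mulnDl.
rewrite natrD !natr_sum (@big_nat_recl _ _ _ L 0 (fun j => (cin inp s j * 2^j)%N%:R)) // expn0 muln1.
have -> : (\sum_(0 <= j < L.+1) ((dig inp s j == 1%N) * 2^j)%N%:R : R)
   = \sum_(0 <= j < L.+1) ((1 <= dig inp s j) * 2^j)%N%:R
     - \sum_(0 <= j < L.+1) ((2 <= dig inp s j) * 2^j)%N%:R.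
  by rewrite -sumrB; apply: eq_bigr => j _; rewrite !natrM -mulrBl dig12.
rewrite /=; ring.
Qed.

Local Close Scope ring_scope.
Local Open Scope ring_scope.

Lemma fires_x (R : realType) k inp s : fires (net R k) inp s (inl tt) = xin inp s.
Proof. by case: s. Qed.

Lemma sum_aux (R : realType) n (G : nat -> R) :
  \sum_(a < 7 * n) G a = \sum_(0 <= b < 7) \sum_(0 <= j < n) G (b * n + j)%N.
Proof. by rewrite -(big_mkord xpredT) sum_blocks. Qed.

Lemma dig0 inp j : dig inp 0 j = 0%N. Proof. by []. Qed.
Lemma Val0 inp p : Val inp p 0 = 0%N.
Proof. by rewrite /Val big1_seq. Qed.

Lemma spec0 inp k b j : specB inp k 0 b j = false.
Proof. rewrite /specB Val0; case: b => [|[|[|[|[|[|[|b]]]]]]] //=; rewrite leqn0 ?expn_eq0 ?muln_eq0 ?expn_eq0 //. Qed.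

Lemma ab_lt (k : nat) (a : 'I_(7 * k.+1)) : (a %/ k.+1 < 7)%N.
Proof. by rewrite ltn_divLR // mulnC. Qed.

Lemma fires_aux (R : realType) k inp s (a : 'I_(7 * k.+1)) :
  fires (net R k) inp s (inr (inr a)) = specB inp k s (a %/ k.+1) (a %% k.+1).
Proof.
elim: s a => [|s IH] a; first by rewrite spec0.
rewrite [LHS]/= sum_neuron fires_x.
rewrite [X in _ + X + _]big1 ?addr0; last by move=> i _; case: ifP.
rewrite (eq_bigr (fun a0 : 'I_(7 * k.+1) =>
   (fun a0 : nat => if specB inp k s (a0 %/ k.+1) (a0 %% k.+1)
     then wb R k (a0 %/ k.+1) (a0 %% k.+1) (a %/ k.+1) (a %% k.+1) else 0) a0)); last first.
  by move=> a0 _; rewrite IH.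
rewrite (@sum_aux R k.+1 (fun a0 : nat => if specB inp k s (a0 %/ k.+1) (a0 %% k.+1)
     then wb R k (a0 %/ k.+1) (a0 %% k.+1) (a %/ k.+1) (a %% k.+1) else 0)).
rewrite (eq_bigr (fun b => \sum_(0 <= j < k.+1) (if specB inp k s b j
     then wb R k b j (a %/ k.+1) (a %% k.+1) else 0))); last first.
  move=> b _; apply: eq_big_nat => j /andP[_ Hj].
  by rewrite divnMDl // (divn_small Hj) addn0 modnMDl (modn_small Hj).
have -> : (if xin inp s then wx R (a %/ k.+1) (a %% k.+1) else 0)
   = (xin inp s)%:R * wx R (a %/ k.+1) (a %% k.+1) by case: (xin inp s); rewrite ?mul1r ?mul0r.
have Hb := ab_lt a; have Hj : (a %% k.+1 < k.+1)%N by rewrite ltn_mod.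
move: Hb Hj; rewrite /thA /specB.
case: (a %/ k.+1)%N => [|[|[|[|[|[|[|b]]]]]]] //= _ Hj;
  first [by rewrite aux_uvw // subr_ge0 ler_nat | by rewrite aux_G // subr_ge0 ler_nat].
Qed.

Local Close Scope ring_scope.
Local Open Scope ring_scope.

Lemma fires_y (R : realType) k inp s (i : 'I_k) :
  fires (net R k) inp s.+1 (inr (inl i)) =
  let T := Val inp i.+1 s in
  (0 <= ((xin inp s && (i == 0%N :> nat))%:R : R)
       + 2 * (2^i <= T)%N%:R - 2 * (2^i.+1 <= T)%N%:R + 2 * (3 * 2^i <= T)%N%:R
       - ((i == 0%N :> nat) && (1 <= Val inp k.+1 s)%N)%:R - 1).
Proof.
rewrite [LHS]/= sum_neuron fires_x.
rewrite [X in _ + X + _]big1 ?addr0; last by move=> j _; case: ifP.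
rewrite (eq_bigr (fun a0 : 'I_(7 * k.+1) =>
   (fun a0 : nat => if specB inp k s (a0 %/ k.+1) (a0 %% k.+1)
     then wy R (a0 %/ k.+1) (a0 %% k.+1) i else 0) a0)); last first.
  by move=> a0 _; rewrite fires_aux.
rewrite (@sum_aux R k.+1 (fun a0 : nat => if specB inp k s (a0 %/ k.+1) (a0 %% k.+1)
     then wy R (a0 %/ k.+1) (a0 %% k.+1) i else 0)).
rewrite (eq_bigr (fun b => \sum_(0 <= j < k.+1) (if specB inp k s b j
     then wy R b j i else 0))); last first.
  move=> b _; apply: eq_big_nat => j /andP[_ Hj].
  by rewrite divnMDl // (divn_small Hj) addn0 modnMDl (modn_small Hj).
rewrite sum7.
have Hi : (i < k.+1)%N by apply: ltnW (ltn_ord i) .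
have Z : forall b, (b <= 2)%N -> \sum_(0 <= j < k.+1) (if specB inp k s b j then wy R b j i else 0) = 0.
  by move=> b Hb; apply: big1_seq => j _; case: b Hb => [|[|[|b]]] //= _; case: ifP.
have P : forall (c : nat -> bool) (w : R),
    \sum_(0 <= j < k.+1) (if c j then w * (j == i :> nat)%:R else 0) = w * (c i)%:R.
  move=> c w; rewrite -(sum_pick (fun j => w * (c j)%:R) Hi).
  by apply: eq_bigr => j _; case: (c j); case: eqP => //= _; rewrite ?mulr0.
rewrite (Z 0%N) // (Z 1%N) // ?(Z 2%N) // !add0r.
rewrite /wy P.
rewrite (eq_bigr (fun j => if specB inp k s 4 j then (-2) * (j == i :> nat)%:R else 0)); last first.
  by move=> j _; rewrite mulNr.
rewrite P P.
rewrite (eq_bigr (fun j => if j == 0%N then - ((i == 0%N :> nat) && specB inp k s 6 j)%:R else 0)); last first.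
  move=> j _; case: (specB _ _ _ _ _); case: (j == 0%N); case: (i == 0%N :> nat) => //=; by rewrite ?oppr0.
rewrite (@sum_pick R k.+1 0 (fun j => - ((i == 0%N :> nat) && specB inp k s 6 j)%:R)) // /specB /levG /=.
have -> : ((if xin inp s then (i == 0%N :> nat)%:R else 0) : R) = (xin inp s && (i == 0%N :> nat))%:R.
  by case: (xin inp s).
congr (0 <= _); ring.
Qed.

Lemma ycomb (R : realType) (x c g1 g2 g3 nz : bool) : (g2 -> g1) -> (g3 -> g2) ->
  (0 <= ((x && c)%:R : R) + 2 * g1%:R - 2 * g2%:R + 2 * g3%:R - (c && nz)%:R - 1)
  = if c && ~~ nz then x || ((g1 && ~~ g2) || g3) else (g1 && ~~ g2) || g3.
Proof.
case: x; case: c; case: g1; case: g2; case: g3; case: nz => //= H1 H2;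
  try (by have := H1 isT); try (by have := H2 isT);
  first [apply/idP; rewrite /=; lra | apply/negbTE; rewrite -ltNge /=; lra].
Qed.

Lemma fires_y3 (R : realType) k inp s (i : 'I_k) :
  fires (net R k) inp s.+1 (inr (inl i)) =
  let N := Val inp k.+1 s in
  let B := (2^i <= N %% 2^i.+1)%N in
  if (i == 0%N :> nat) && (N == 0%N) then xin inp s || B else B.
Proof.
rewrite fires_y /= ycomb; last first.
- move=> H; apply: leq_trans _ H; rewrite expnS; set P := (2^i)%N; lia.
- move=> H; apply: leq_trans _ H; rewrite expnS; set P := (2^i)%N; lia.
have -> : ~~ (0 < Val inp k.+1 s)%N = (Val inp k.+1 s == 0%N) by rewrite lt0n negbK.
have -> : (((2 ^ i <= Val inp i.+1 s) && ~~ (2 ^ i.+1 <= Val inp i.+1 s)) ||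
     (3 * 2 ^ i <= Val inp i.+1 s))%N = (2 ^ i <= Val inp k.+1 s %% 2 ^ i.+1)%N.
  have Hk : k.+1 = (i.+1 + (k - i))%N by have := ltn_ord i; lia.
  rewrite Hk Val_mod expnS -bitT ?expn_gt0 //.
  have := Val_bound inp i.+1 s; rewrite !expnS; lia.
by [].
Qed.

Lemma out_val (R : realType) k inp s : (0 < k)%N -> (Val inp k.+1 s < 2^k)%N ->
  output_value (net R k) inp s.+1 =
  if Val inp k.+1 s == 0%N then (xin inp s : nat) else Val inp k.+1 s.
Proof.
move=> k0 Hlt; rewrite /output_value /output_neuron.
under eq_bigr => i _ do rewrite fires_y3 /=.
case: eqP => HN.
  rewrite HN; move: HN Hlt; case: k k0 => [|k'] // _ HN _.
  rewrite big_ord_recl /= !mod0n !leqn0 !expn_eq0 /= orbF muln1 big1 ?addn0 // // => i _; by rewrite mod0n leqn0 expn_eq0.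
rewrite (eq_bigr (fun i : 'I_k => (2^i <= Val inp k.+1 s %% 2^i.+1)%N * 2^i)%N); last first.
  by move=> i _; rewrite andbF.
rewrite -(big_mkord xpredT (fun i => (2^i <= Val inp k.+1 s %% 2^i.+1)%N * 2^i)%N) binsum.
by rewrite modn_small.
Qed.

Local Close Scope ring_scope.
End Helpers.
Import Helpers.

Theorem lemma1 (R : realType) :
  exists c : nat, forall t : nat, 1 <= t ->
    let k := up_log 2 t.+1 in
    exists m : nat, m <= c * k /\
    exists N : network R k m, wf_network N /\
      forall (inp : nat -> bool) (tau : nat), 1 <= tau <= t ->
        let r := input_count inp tau in
        exists s : nat, tau <= s <= tau + up_log 2 r + 1 /\
          output_value N inp s = r.
Proof.
exists 14 => t t1 k.
have k0 : 0 < k by rewrite /k up_log_gt0.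
have tk : t.+1 <= 2 ^ k by apply: up_logP.
exists (7 * k.+1); split; first by lia.
exists (net R k); split; first exact: net_wf.
move=> inp tau /andP[tau1 taut] r.
have rle : r <= tau by apply: cnt_le.
have Pk : 2 ^ k <= 2 ^ k.+1 by rewrite leq_exp2l.
case: (ltnP 1 r) => Hr.
  exists tau.+2; split.
    have := up_log_gt0 2 r; rewrite Hr /= => H; apply/andP; split; lia.
  rewrite out_val //; rewrite Val_cnt; try lia.
  by rewrite -/r; case: eqP => //; lia.
exists tau.+1; split; first by apply/andP; split; lia.
case: tau tau1 taut @r rle Hr => [|tau'] // _ taut r rle Hr.
have Hc : input_count inp tau'.+1 = input_count inp tau' + inp tau'.+1 by apply: cntS.
have := cnt_le inp tau' => Hle.
rewrite out_val //; rewrite Val_cnt; try lia.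
rewrite /r Hc /xin /=.
case: eqP => H0; first by rewrite H0.
move: Hr; rewrite /r Hc; case: (inp tau'.+1) => /=; lia.
Qed.
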